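(* Let $\gamma\ge1$ and let $\alpha,\beta$ be positive constants with $-1<\alpha\le\beta$. Then $$\alpha^2\le\frac{\mathcal{Q}\big((\alpha+1)^{2/\gamma}\big)}{\zeta(\beta,\gamma)},$$ where $\mathcal{Q}(h)=\frac1\gamma\int_1^h(s^{\gamma-2}-s^{-2})\,ds$ and $\zeta(\beta,\gamma)=\frac{1}{\gamma^2}\big\{(\beta+1)^{-\frac2\gamma}+(\beta+1)^{-\frac2\gamma-1}\big\}$. *)

(* Defs.v *)
From Stdlib Require Import Reals.
From Coquelicot Require Import Coquelicot.
Open Scope R_scope.

Definition Qfun (gamma h : R) : R :=
  / gamma * RInt (fun s => Rpower s (gamma - 2) - Rpower s (-2)) 1 h.

Definition zeta (beta gamma : R) : R :=
  / (gamma ^ 2) * (Rpower (beta + 1) (- 2 / gamma) + Rpower (beta + 1) (- 2 / gamma - 1)).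

(* Main.v *)
Require Import Defs.
From Stdlib Require Import Reals Lra.
From Coquelicot Require Import Coquelicot.
Open Scope R_scope.

Lemma exp_le_m (x y : R) : x <= y -> exp x <= exp y.
Proof.
  intros H. destruct (Rle_lt_or_eq_dec _ _ H) as [l|e].
  - left. apply exp_increasing. exact l.
  - rewrite e. lra.
Qed.

Lemma ln_ge0 (x : R) : 1 <= x -> 0 <= ln x.
Proof.
  intros H. destruct (Rle_lt_or_eq_dec _ _ H) as [l|e].
  - rewrite <- ln_1. left. apply ln_increasing; lra.
  - rewrite <- e, ln_1. lra.
Qed.

Lemma ln_le_m (x y : R) : 0 < x -> x <= y -> ln x <= ln y.
Proof.
  intros H0 H. destruct (Rle_lt_or_eq_dec _ _ H) as [l|e].
  - left. apply ln_increasing; lra.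
  - rewrite e. lra.
Qed.

Lemma ex_RInt_pw (c d h : R) : 1 <= h ->
  ex_RInt (fun s => exp (c * ln s) - exp (d * ln s)) 1 h.
Proof.
  intros Hh. apply (@ex_RInt_continuous R_CompleteNormedModule). intros z Hz.
  rewrite Rmin_left in Hz by lra. rewrite Rmax_right in Hz by lra.
  assert (H : ex_derive (fun s => exp (c * ln s) - exp (d * ln s)) z) by (auto_derive; lra).
  exact (ex_derive_continuous _ _ H).
Qed.

Lemma int_bound (g h : R) : 1 <= g -> 1 <= h ->
  / h * (exp (g * ln h) / g - ln h - / g) <=
  RInt (fun s => Rpower s (g - 2) - Rpower s (-2)) 1 h.
Proof.
  intros Hg Hh.
  set (F := fun s => / h * (exp (g * ln s) / g - ln s)).
  set (df := fun s => / h * (exp ((g - 1) * ln s) - / s)).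
  assert (HI : is_RInt df 1 h (minus (F h) (F 1))).
  { apply (@is_RInt_derive R_CompleteNormedModule).
    - intros x Hx. rewrite Rmin_left in Hx by lra. rewrite Rmax_right in Hx by lra.
      unfold F, df. auto_derive. lra.
      replace ((g - 1) * ln x) with (g * ln x + - ln x) by ring.
      rewrite exp_plus, exp_Ropp, exp_ln by lra. field. lra.
    - intros x Hx. rewrite Rmin_left in Hx by lra. rewrite Rmax_right in Hx by lra.
      assert (H : ex_derive df x) by (unfold df; auto_derive; lra).
      exact (ex_derive_continuous _ _ H). }
  assert (E : RInt df 1 h = / h * (exp (g * ln h) / g - ln h - / g)).
  { rewrite (is_RInt_unique _ _ _ _ HI). unfold minus, plus, opp; simpl.
    unfold F. rewrite ln_1, Rmult_0_r, exp_0. field. split; lra. }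
  rewrite <- E. apply RInt_le.
  - lra.
  - exists (minus (F h) (F 1)). exact HI.
  - unfold Rpower. apply ex_RInt_pw; lra.
  - intros x Hx. unfold df, Rpower.
    assert (Hl : 0 <= ln x) by (apply ln_ge0; lra).
    assert (D : exp (-2 * ln x) <= exp ((g - 2) * ln x)).
    { apply exp_le_m. nra. }
    replace ((g - 1) * ln x) with ((g - 2) * ln x + ln x) by ring.
    rewrite exp_plus, exp_ln by lra.
    replace (/ x) with (x * exp (-2 * ln x)).
    2:{ replace (-2 * ln x) with (- (ln x + ln x)) by ring.
        rewrite exp_Ropp, exp_plus, exp_ln by lra. field. lra. }
    assert (Hxh : x * / h <= 1).
    { apply (Rmult_le_reg_r h); [lra|]. rewrite Rmult_assoc, Rinv_l by lra. lra. }
    assert (0 < x * / h) by (apply Rmult_lt_0_compat; [lra| apply Rinv_0_lt_compat; lra]).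
    replace (/ h * (x * exp ((g - 2) * ln x) - x * exp (-2 * ln x)))
      with ((x * / h) * (exp ((g - 2) * ln x) - exp (-2 * ln x))) by ring.
    nra.
Qed.

Lemma ln_ineq (a : R) : 1 <= a -> 2 * a * ln a <= a * a - 1.
Proof.
  intros Ha.
  set (F := fun s => (s - / s) / 2 - ln s).
  set (df := fun s => (1 - / s) * (1 - / s) / 2).
  assert (HI : is_RInt df 1 a (minus (F a) (F 1))).
  { apply (@is_RInt_derive R_CompleteNormedModule).
    - intros x Hx. rewrite Rmin_left in Hx by lra. rewrite Rmax_right in Hx by lra.
      unfold F, df. auto_derive. lra. field. lra.
    - intros x Hx. rewrite Rmin_left in Hx by lra. rewrite Rmax_right in Hx by lra.
      assert (H : ex_derive df x) by (unfold df; auto_derive; lra).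
      exact (ex_derive_continuous _ _ H). }
  assert (P := is_RInt_ge_0 _ _ _ _ Ha HI).
  assert (P' : 0 <= F a - F 1).
  { apply P. intros x Hx. unfold df. pose proof (Rle_0_sqr (1 - / x)). unfold Rsqr in *. lra. }
  unfold F in P'. rewrite ln_1 in P'.
  replace ((1 - / 1) / 2 - 0) with 0 in P' by (field).
  assert (a * ((a - / a) / 2 - ln a - 0) = (a * a - 1) / 2 - a * ln a) by (field; lra).
  nra.
Qed.

Theorem propositionB1 (gamma alpha beta : R)
  (hgamma : 1 <= gamma) (halpha : 0 < alpha) (hbeta : 0 < beta)
  (halpha1 : -1 < alpha) (hab : alpha <= beta) :
  alpha ^ 2 <= Qfun gamma (Rpower (alpha + 1) (2 / gamma)) / zeta beta gamma.
Proof.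
  set (a := alpha + 1).
  set (L := ln a).
  assert (Ha : 1 < a) by (unfold a; lra).
  assert (HL : 0 <= L) by (apply ln_ge0; lra).
  set (E := exp (- 2 / gamma * L)).
  assert (HE : 0 < E) by apply exp_pos.
  set (h := Rpower a (2 / gamma)).
  assert (Hh : 1 <= h).
  { unfold h. rewrite <- (Rpower_O a) by lra. apply Rle_Rpower; [lra|].
    apply Rdiv_le_0_compat; lra. }
  assert (Hlnh : ln h = 2 / gamma * L) by (unfold h; rewrite ln_Rpower; reflexivity).
  assert (Hhg : exp (gamma * ln h) = a * a).
  { rewrite Hlnh. replace (gamma * (2 / gamma * L)) with (L + L) by (field; lra).
    rewrite exp_plus. unfold L. rewrite exp_ln by lra. reflexivity. }
  assert (Hih : / h = E).
  { unfold E, h, Rpower. rewrite <- exp_Ropp. f_equal. unfold L. field. lra. }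
  assert (HQ : / gamma * (E * (a * a / gamma - 2 / gamma * L - / gamma)) <=
               Qfun gamma h).
  { unfold Qfun. apply Rmult_le_compat_l.
    - left. apply Rinv_0_lt_compat. lra.
    - rewrite <- Hih, <- Hhg, <- Hlnh. apply int_bound; lra. }
  set (lb := ln (beta + 1)).
  assert (Hlb : L <= lb) by (apply ln_le_m; unfold a; lra).
  assert (Hg0 : 0 < / gamma) by (apply Rinv_0_lt_compat; lra).
  assert (Z1 : Rpower (beta + 1) (- 2 / gamma) <= E).
  { unfold Rpower, E. apply exp_le_m. fold lb. unfold Rdiv.
    replace (-2 * / gamma * lb) with (- (2 * / gamma * lb)) by ring.
    replace (-2 * / gamma * L) with (- (2 * / gamma * L)) by ring.
    apply Ropp_le_contravar. apply Rmult_le_compat_l; lra. }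
  assert (Z2 : Rpower (beta + 1) (- 2 / gamma - 1) <= E * / a).
  { unfold Rpower. replace (/ a) with (exp (- L)).
    2:{ rewrite exp_Ropp. unfold L. rewrite exp_ln by lra. reflexivity. }
    unfold E. rewrite <- exp_plus. apply exp_le_m. fold lb. unfold Rdiv.
    replace ((-2 * / gamma - 1) * lb) with (- ((2 * / gamma + 1) * lb)) by ring.
    replace (-2 * / gamma * L + - L) with (- ((2 * / gamma + 1) * L)) by ring.
    apply Ropp_le_contravar. apply Rmult_le_compat_l; lra. }
  assert (Zpos : 0 < zeta beta gamma).
  { unfold zeta. apply Rmult_lt_0_compat.
    - apply Rinv_0_lt_compat. nra.
    - unfold Rpower. pose proof (exp_pos (- 2 / gamma * ln (beta + 1))).
      pose proof (exp_pos ((- 2 / gamma - 1) * ln (beta + 1))). lra. }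
  assert (Zle : zeta beta gamma <= / (gamma ^ 2) * (E + E * / a)).
  { unfold zeta. apply Rmult_le_compat_l.
    - left. apply Rinv_0_lt_compat. nra.
    - lra. }

  assert (Hln := ln_ineq a (Rlt_le _ _ Ha)). fold L in Hln.
  assert (Key : alpha ^ 2 * (/ (gamma ^ 2) * (E + E * / a)) <=
                / gamma * (E * (a * a / gamma - 2 / gamma * L - / gamma))).
  { replace alpha with (a - 1) by (unfold a; ring).
    assert (0 < / (gamma ^ 2)) by (apply Rinv_0_lt_compat; nra).
    replace ((a - 1) ^ 2 * (/ (gamma ^ 2) * (E + E * / a)))
      with (/ (gamma ^ 2) * E * ((a - 1) * (a - 1) * (a + 1) * / a)) by (field; lra).
    replace (/ gamma * (E * (a * a / gamma - 2 / gamma * L - / gamma)))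
      with (/ (gamma ^ 2) * E * (a * a - 1 - 2 * L)) by (field; lra).
    apply Rmult_le_compat_l; [nra|].
    apply (Rmult_le_reg_r a); [lra|].
    replace ((a - 1) * (a - 1) * (a + 1) * / a * a) with ((a - 1) * (a - 1) * (a + 1))
      by (field; lra).
    nra. }
  assert (alpha ^ 2 * zeta beta gamma <=
          alpha ^ 2 * (/ (gamma ^ 2) * (E + E * / a))).
  { apply Rmult_le_compat_l; [nra|lra]. }
  apply (proj1 (Rle_div_r _ _ _ Zpos)). fold a h. lra.
Qed.
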